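(* Let $pu$, $uv$, and $vq$ be three edges of a Euclidean minimum spanning tree of a finite point set in the plane such that $p$ and $q$ lie on the same side of the line through $u$ and $v$. Let $\alpha=\angle puv$ and $\gamma=\angle uvq$ denote the convex angles at $u$ and $v$, respectively. If $\alpha+\gamma\leqslant 210^\circ$, then $|pq|\leqslant\sqrt{3}\cdot\max\{|pu|,|uv|,|vq|\}$.
   Context: $|xy|$ denotes the Euclidean distance between points $x$ and $y$; angles are measured in degrees. *)

(* Defs.v *)
From Stdlib Require Import Reals List Relations.
Open Scope R_scope.

Definition point := (R * R)%type.

Definition edist (x y : point) : R :=
  sqrt ((fst x - fst y) ^ 2 + (snd x - snd y) ^ 2).

Definition angle_deg (a b c : point) : R :=
  acos (((fst a - fst b) * (fst c - fst b) + (snd a - snd b) * (snd c - snd b))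
        / (edist a b * edist c b)) * 180 / PI.

Definition orient (u v x : point) : R :=
  (fst v - fst u) * (snd x - snd u) - (snd v - snd u) * (fst x - fst u).

Definition same_side (u v p q : point) : Prop :=
  orient u v p * orient u v q > 0.

(* Graphs on a finite point set S (a duplicate-free list) with edge list E
   of (unordered) straight-line edges. *)
Definition adjacent (E : list (point * point)) (a b : point) : Prop :=
  In (a, b) E \/ In (b, a) E.

Definition simple_edges (S : list point) (E : list (point * point)) : Prop :=
  NoDup E /\
  (forall a b, In (a, b) E -> In a S /\ In b S /\ a <> b /\ ~ In (b, a) E).

Definition connected_on (S : list point) (E : list (point * point)) : Prop :=
  forall a b, In a S -> In b S -> clos_refl_trans point (adjacent E) a b.

Definition spanning_tree (S : list point) (E : list (point * point)) : Prop :=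
  simple_edges S E /\ connected_on S E /\ length E = (length S - 1)%nat.

Definition weight (E : list (point * point)) : R :=
  fold_right (fun e acc => edist (fst e) (snd e) + acc) 0 E.

Definition EMST (S : list point) (T : list (point * point)) : Prop :=
  spanning_tree S T /\ forall T', spanning_tree S T' -> weight T <= weight T'.

(* Main.v *)
Require Import Defs.
From Stdlib Require Import Reals List Relations Lra Lia Psatz Nsatz Classical.
Open Scope R_scope.
Ltac nsz := repeat match goal with H : _ = _ |- _ => revert H end; cbn [pow]; intros; nsatz.

Section Comb.
Variable E' : list (point * point).
Let C' := clos_refl_trans point (adjacent E').

Lemma split_path (a b x y : point) :
  clos_refl_trans point (adjacent ((a,b)::E')) x y ->
  C' x y \/ ((C' x a \/ C' x b) /\ (C' a y \/ C' b y)).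
Proof.
  induction 1 as [x y H | x | x y z _ IH1 _ IH2].
  - destruct H as [H|H]; destruct H as [H|H].
    + inversion H; subst. right. split; [left|right]; apply rt_refl.
    + left. apply rt_step. left; auto.
    + inversion H; subst. right. split; [right|left]; apply rt_refl.
    + left. apply rt_step. right; auto.
  - left. apply rt_refl.
  - destruct IH1 as [H1|[H1 H1']]; destruct IH2 as [H2|[H2 H2']].
    + left. eapply rt_trans; eauto.
    + right. split; auto. destruct H2 as [H2|H2]; [left|right]; eapply rt_trans; eauto.
    + right. split; auto. destruct H1' as [H1'|H1']; [left|right]; eapply rt_trans; eauto.
    + right. split; auto.
Qed.
End Comb.

Lemma rt_nil (x y : point) : clos_refl_trans point (adjacent nil) x y -> x = y.
Proof.
  induction 1 as [x y H | x | x y z _ IH1 _ IH2]; auto.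
  - destruct H as [H|H]; destruct H.
  - congruence.
Qed.

Lemma count_lemma (E : list (point*point)) : forall (S R : list point),
  NoDup S ->
  (forall x, In x S -> exists r, In r R /\ clos_refl_trans point (adjacent E) x r) ->
  (length S <= length E + length R)%nat.
Proof.
  induction E as [|[a b] E' IH]; intros S R HS HR.
  - simpl. apply NoDup_incl_length; auto.
    intros x Hx. destruct (HR x Hx) as [r [Hr Hxr]]. apply rt_nil in Hxr. subst; auto.
  - simpl.
    destruct (classic (exists r, In r R /\ clos_refl_trans point (adjacent E') a r)) as [[ra [Hra Ha]]|NA].
    + assert (length S <= length E' + length (b :: R))%nat by
      (apply IH; auto; intros x Hx; destruct (HR x Hx) as [r [Hr Hxr]];
       destruct (split_path E' a b x r Hxr) as [K|[[K|K] _]];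
       [exists r; split; [right|]; auto
       |exists ra; split; [right; auto|eapply rt_trans; eauto]
       |exists b; split; [left; auto|auto]]).
      simpl in H. lia.
    + destruct (classic (exists r, In r R /\ clos_refl_trans point (adjacent E') b r)) as [[rb [Hrb Hb]]|NB].
      * assert (length S <= length E' + length (a :: R))%nat by
        (apply IH; auto; intros x Hx; destruct (HR x Hx) as [r [Hr Hxr]];
         destruct (split_path E' a b x r Hxr) as [K|[[K|K] _]];
         [exists r; split; [right|]; auto
         |exists a; split; [left; auto|auto]
         |exists rb; split; [right; auto|eapply rt_trans; eauto]]).
        simpl in H. lia.
      * assert (length S <= length E' + length R)%nat.
        { apply IH; auto. intros x Hx. destruct (HR x Hx) as [r [Hr Hxr]].
          destruct (split_path E' a b x r Hxr) as [K|[_ [K|K]]].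
          - exists r; auto.
          - exfalso; apply NA; eauto.
          - exfalso; apply NB; eauto. }
        lia.
Qed.

Lemma edist_sym x y : edist x y = edist y x.
Proof. unfold edist. f_equal. ring. Qed.

Lemma weight_app l1 l2 : weight (l1 ++ l2) = weight l1 + weight l2.
Proof. induction l1 as [|e l IH]; simpl; [lra| rewrite IH; lra]. Qed.

Lemma adj_sym E x y : adjacent E x y -> adjacent E y x.
Proof. unfold adjacent; tauto. Qed.

Lemma crt_sym E x y : clos_refl_trans point (adjacent E) x y -> clos_refl_trans point (adjacent E) y x.
Proof.
  induction 1. apply rt_step, adj_sym; auto. apply rt_refl. eapply rt_trans; eauto.
Qed.

Lemma crt_mono E1 E2 : (forall a b, adjacent E1 a b -> clos_refl_trans point (adjacent E2) a b) ->
  forall x y, clos_refl_trans point (adjacent E1) x y -> clos_refl_trans point (adjacent E2) x y.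
Proof. intros H x y K. induction K. auto. apply rt_refl. eapply rt_trans; eauto. Qed.

Lemma exchange S T x y z :
  NoDup S -> EMST S T -> adjacent T x y -> adjacent T y z -> x <> z -> edist x y <= edist x z.
Proof.
  intros HS [[[ND Hsimp] [Hcon Hlen]] Hmin] Hxy Hyz Hxz.
  destruct (Rle_dec (edist x y) (edist x z)) as [ok|nok]; [exact ok|exfalso].
  assert (Hw : exists e0, In e0 T /\ (e0 = (x,y) \/ e0 = (y,x))).
  { destruct Hxy; eauto. }
  destruct Hw as [e0 [He0 Heq]].
  assert (Hxy' : x <> y /\ In x S /\ In y S).
  { destruct Heq; subst; destruct (Hsimp _ _ He0) as [A [B [C _]]]; repeat split; auto. }
  assert (Hyz' : y <> z /\ In z S).
  { destruct Hyz as [K|K]; destruct (Hsimp _ _ K) as [A [B [C _]]]; split; auto. }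
  destruct Hxy' as [Nxy [Sx Sy]]. destruct Hyz' as [Nyz Sz].
  destruct (in_split _ _ He0) as [T1 [T2 HT]].
  set (T0 := T1 ++ T2).
  assert (ND0 : NoDup T0) by (unfold T0; rewrite HT in ND; eapply NoDup_remove_1; eauto).
  assert (InT0 : forall e, In e T0 -> In e T).
  { intros e He. rewrite HT. unfold T0 in He. apply in_app_or in He. apply in_or_app.
    destruct He; auto. right; right; auto. }
  assert (InT : forall e, In e T -> e <> e0 -> In e T0).
  { intros e He Hne. rewrite HT in He. apply in_app_or in He. unfold T0. apply in_or_app.
    destruct He as [He|[He|He]]; auto. congruence. }
  assert (Adj0 : forall a b, adjacent T a b -> ~ (a = x /\ b = y) -> ~ (a = y /\ b = x) -> adjacent T0 a b).
  { intros a b [K|K] N1 N2; [left|right]; apply InT; auto;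
    intro E; subst; destruct Heq as [Q|Q]; inversion Q; subst; tauto. }
  assert (Hyz0 : adjacent T0 y z).
  { apply Adj0; auto; intros [A B]; subst; auto. }
  assert (HlenT : (length T = Datatypes.S (length T0))%nat).
  { rewrite HT. unfold T0. rewrite !length_app. simpl. lia. }
  assert (Conn : forall E2, (forall e, In e T0 -> In e E2) -> adjacent E2 x z -> connected_on S E2).
  { intros E2 Hinc Hxz2 a b Ha Hb.
    apply (crt_mono T). 2: apply Hcon; auto.
    intros a' b' Hab.
    assert (Hxy2 : clos_refl_trans point (adjacent E2) x y).
    { eapply rt_trans. apply rt_step; exact Hxz2.
      apply crt_sym. apply rt_step. destruct Hyz0 as [K|K]; [left|right]; auto. }
    destruct (classic (a' = x /\ b' = y)) as [[-> ->]|N1]; auto.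
    destruct (classic (a' = y /\ b' = x)) as [[-> ->]|N2]. apply crt_sym; auto.
    apply rt_step. destruct (Adj0 _ _ Hab N1 N2) as [K|K]; [left|right]; auto. }
  destruct (classic (adjacent T x z)) as [Axz|NAxz].
  - assert (Axz0 : adjacent T0 x z).
    { apply Adj0; auto; intros [A B]; subst; auto. }
    assert (C0 : connected_on S T0) by (apply Conn; auto).
    assert (length S <= length T0 + length (x :: nil))%nat.
    { apply count_lemma; auto. intros w Hw. exists x; split; [left; auto|]. apply C0; auto. }
    simpl in H. destruct S; simpl in *; [contradiction|]. lia.
  - set (T' := (x,z) :: T0).
    assert (ST : spanning_tree S T').
    { split; [split|split].
      - constructor; auto. intro K. apply NAxz. left. auto.
      - intros a b [K|K].
        + inversion K; subst. repeat split; auto. intros [K'|K'].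
          * inversion K'; auto.
          * apply NAxz. right. auto.
        + destruct (Hsimp a b (InT0 _ K)) as [A [B [C D]]]. repeat split; auto.
          intros [K'|K'].
          * inversion K'; subst. apply NAxz. right. apply InT0; auto.
          * apply D. apply InT0; auto.
      - apply Conn. intros; right; auto. left; left; auto.
      - unfold T'. simpl. lia. }
    pose proof (Hmin T' ST) as Hw.
    unfold T' in Hw. simpl in Hw. rewrite HT in Hw. unfold T0 in Hw.
    rewrite !weight_app in Hw. simpl in Hw.
    assert (edist (fst e0) (snd e0) = edist x y).
    { destruct Heq; subst; simpl; auto using edist_sym. }
    lra.
Qed.

Lemma convex_quad (A B C t0 t1 t M : R) :
  0 <= A -> t0 <= t -> t <= t1 ->
  A*t0^2 + B*t0 + C <= M -> A*t1^2 + B*t1 + C <= M -> A*t^2 + B*t + C <= M.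
Proof.
  intros HA H0 H1 E0 E1.
  destruct (Req_dec t0 t1) as [E|E].
  - subst. assert (t = t1) by lra. subst. lra.
  - assert (Hlt : t0 < t1) by lra.
    assert (K : (t1 - t0) * (A*t^2 + B*t + C) <=
               (t1 - t) * (A*t0^2 + B*t0 + C) + (t - t0) * (A*t1^2 + B*t1 + C)).
    { assert (0 <= A * (t - t0) * (t1 - t)) by (apply Rmult_le_pos; [apply Rmult_le_pos|]; lra).
      nra. }
    assert ((t1 - t) * (A*t0^2 + B*t0 + C) + (t - t0) * (A*t1^2 + B*t1 + C) <= (t1 - t0) * M).
    { nra. }
    nra.
Qed.

Section Core.
Variables (d a b c1 s1 c2 s2 L r3 : R).
Hypotheses (Hd : 0 < d) (Ha : 0 < a) (Hb : 0 < b) (HaL : a <= L) (HbL : b <= L) (HdL : d <= L)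
  (U1 : c1^2 + s1^2 = 1) (U2 : c2^2 + s2^2 = 1) (Hs1 : 0 < s1) (Hs2 : 0 < s2)
  (C1 : 2*a*c1 <= d) (C2 : 2*d*c1 <= a) (C3 : -2*b*c2 <= d) (C4 : -2*d*c2 <= b)
  (R3 : r3^2 = 3) (R3p : 0 < r3).

Lemma c1_half : c1 <= 1/2.
Proof. destruct (Rle_dec c1 (1/2)); [auto|]. nra. Qed.
Lemma c2_half : -1/2 <= c2.
Proof. destruct (Rle_dec (-1/2) c2); [auto|]. nra. Qed.

Definition F (x y : R) := (d + y*c2 - x*c1)^2 + (y*s2 - x*s1)^2.

Lemma caseA : c1*s2 - c2*s1 >= 0 -> F a b <= 3*L^2.
Proof.
  intro H. pose proof c1_half. pose proof c2_half.
  assert (Id : (c1-c2)*(1 + (c1*c2+s1*s2)) = (s1+s2)*(c1*s2 - c2*s1)).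
  { assert (c1 - c2 + c1^2*c2 - c1*c2^2 + s1^2*c2 - s2^2*c1 = c1*(1-c2^2-s2^2) - c2*(1-c1^2-s1^2)) by ring.
    nra. }
  assert (c1^2 <= 1) by nra. assert (c2^2 <= 1) by nra.
  assert (1 + c1*c2 >= 0) by nra.
  assert (0 < s1*s2) by nra.
  assert (c2 <= c1) by nra.
  assert (c1^2 <= 1/4) by nra. assert (c2^2 <= 1/4) by nra.
  assert (s1^2 >= 3/4) by nra. assert (s2^2 >= 3/4) by nra.
  assert ((s1*s2)^2 >= 9/16).
  { replace ((s1*s2)^2) with (s1^2*s2^2) by ring. nra. }
  assert (s1*s2 >= 3/4) by nra.
  assert (E : c1*c2 + s1*s2 >= 1/2) by nra.
  assert (2*a*b*(c1*c2+s1*s2) >= a*b).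
  { assert (0 < a*b) by nra. nra. }
  assert (a^2 <= L^2) by nra. assert (b^2 <= L^2) by nra.
  assert (W2 : a^2 + b^2 - 2*a*b*(c1*c2+s1*s2) <= L^2).
  { destruct (Rle_dec a b); nra. }
  assert (Wx : b*c2 - a*c1 <= L/2).
  { destruct (Rle_dec a b).
    - assert (b*c2 <= b*c1) by nra. nra.
    - assert (- a*c1 <= - a*c2) by nra. nra. }
  unfold F.
  assert (Eq : (d + b*c2 - a*c1)^2 + (b*s2 - a*s1)^2 = d^2 + (a^2 + b^2 - 2*a*b*(c1*c2+s1*s2)) + 2*d*(b*c2 - a*c1)).
  { nra. }
  rewrite Eq. destruct (Rle_dec (b*c2 - a*c1) 0); nra.
Qed.

Section CaseB.
Hypotheses (G : c1*c2 + s1*s2 >= r3/2) (Hh : c1*s2 - c2*s1 < 0).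
Let g := c1*c2 + s1*s2.
Let h := s1*c2 - c1*s2.
Lemma gh1 : g^2 + h^2 = 1. Proof. unfold g, h. nsz. Qed.
Lemma hpos : 0 < h. Proof. unfold h. lra. Qed.
Lemma h_half : h <= 1/2.
Proof. pose proof gh1. pose proof hpos. assert (g >= r3/2) by (unfold g; lra).
  assert (g^2 >= 3/4) by nra. nra. Qed.
Lemma gpos : 0 < g. Proof. unfold g. nra. Qed.
Lemma Ec1 : c1 = c2*g - s2*h. Proof. unfold g, h. nsz. Qed.
Lemma Es1 : s1 = s2*g + c2*h. Proof. unfold g, h. nsz. Qed.
Lemma Ec2 : c2 = c1*g + s1*h. Proof. unfold g, h. nsz. Qed.
Lemma Es2 : s2 = s1*g - c1*h. Proof. unfold g, h. nsz. Qed.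
Lemma s1le : s1 <= 1. Proof. nra. Qed.
Lemma s2le : s2 <= 1. Proof. nra. Qed.

Lemma EF1 x : 0 <= x -> x <= L -> 0 <= c2 -> F x 0 <= 3*L^2.
Proof.
  intros. unfold F.
  assert (E : (d + 0*c2 - x*c1)^2 + (0*s2 - x*s1)^2 = d^2 + x^2 - 2*d*x*c1) by nsz.
  rewrite E. pose proof Ec1. pose proof h_half. pose proof hpos. pose proof gpos. pose proof s2le.
  assert (0 <= c2*g) by nra. assert (s2*h <= h) by nra.
  assert (c1 >= -1/2) by lra.
  assert (-2*d*x*c1 <= d*x) by (assert (0 <= d*x) by nra; nra).
  assert (d*x <= L*L) by nra. assert (d^2 <= L^2) by nra. assert (x^2 <= L^2) by nra. nra.
Qed.

Lemma EF2 x : 0 <= x -> x <= L -> c2 < 0 -> F x (-2*d*c2) <= 3*L^2.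
Proof.
  intros. unfold F. pose proof Ec1 as E1. pose proof Es1 as E2. pose proof gh1.
  assert (E : (d + (-2*d*c2)*c2 - x*c1)^2 + ((-2*d*c2)*s2 - x*s1)^2 = d^2 + x^2 + 2*d*x*(c2*g+s2*h)).
  { rewrite E1, E2. nsz. }
  rewrite E. pose proof h_half. pose proof hpos. pose proof gpos. pose proof s2le.
  assert (c2*g <= 0) by nra. assert (s2*h <= h) by nra.
  assert (c2*g+s2*h <= 1/2) by lra.
  assert (2*d*x*(c2*g+s2*h) <= d*x) by (assert (0 <= d*x) by nra; nra).
  assert (d*x <= L*L) by nra. assert (d^2 <= L^2) by nra. assert (x^2 <= L^2) by nra. nra.
Qed.

Lemma EE1 : F L L <= 3*L^2.
Proof.
  unfold F.
  assert (E : (d + L*c2 - L*c1)^2 + (L*s2 - L*s1)^2 = d^2 + L^2*(2-2*g) + 2*d*L*(c2-c1)) by (unfold g; nsz).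
  rewrite E.
  assert (2 - 2*g = (c2-c1)^2 + (s2-s1)^2) by (unfold g; nsz).
  assert ((c2-c1)^2 <= 2 - 2*g) by (pose proof (pow2_ge_0 (s2-s1)); lra).
  assert (2*d*L*(c2-c1) <= d^2/2 + 2*L^2*(c2-c1)^2) by (pose proof (pow2_ge_0 (d - 2*L*(c2-c1))); nra).
  assert (r3 >= 3/2) by nra.
  assert (g >= r3/2) by (unfold g; lra).
  nra.
Qed.

Lemma EE2 : 0 < c1 -> F (2*d*c1) L <= 3*L^2.
Proof.
  intros. unfold F. pose proof Ec2 as E1. pose proof Es2 as E2. pose proof gh1.
  assert (E : (d + L*c2 - (2*d*c1)*c1)^2 + (L*s2 - (2*d*c1)*s1)^2 = d^2 + L^2 - 2*d*L*(c1*g - s1*h)).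
  { rewrite E1, E2. nsz. }
  rewrite E. pose proof h_half. pose proof hpos. pose proof gpos. pose proof s1le.
  assert (0 <= c1*g) by nra. assert (s1*h <= h) by nra.
  assert (c1*g - s1*h >= -1/2) by lra.
  assert (-2*d*L*(c1*g-s1*h) <= d*L) by (assert (0 <= d*L) by nra; nra).
  assert (d*L <= L*L) by nra. assert (d^2 <= L^2) by nra. nra.
Qed.

Lemma EE3 : c1 <= 0 -> F 0 L <= 3*L^2.
Proof.
  intros. unfold F. pose proof Ec2 as E1.
  assert (E : (d + L*c2 - 0*c1)^2 + (L*s2 - 0*s1)^2 = d^2 + L^2 + 2*d*L*c2) by nsz.
  rewrite E. pose proof h_half. pose proof hpos. pose proof gpos. pose proof s1le.
  assert (c1*g <= 0) by nra. assert (s1*h <= h) by nra.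
  assert (c2 <= 1/2) by lra.
  assert (2*d*L*c2 <= d*L) by (assert (0 <= d*L) by nra; nra).
  assert (d*L <= L*L) by nra. assert (d^2 <= L^2) by nra. nra.
Qed.

Lemma caseB : F a b <= 3*L^2.
Proof.
  assert (Fq : forall x y, F x y = (c2^2+s2^2)*y^2 + (2*(c2*(d - x*c1) - s2*x*s1))*y + ((d - x*c1)^2 + x^2*s1^2)).
  { intros; unfold F; ring. }
  assert (Fq' : forall x y, F x y = (c1^2+s1^2)*x^2 + (-2*(c1*(d + y*c2) + s1*y*s2))*x + ((d + y*c2)^2 + y^2*s2^2)).
  { intros; unfold F; ring. }
  assert (HL : F a L <= 3*L^2).
  { rewrite Fq'. destruct (Rle_dec c1 0).
    - apply (convex_quad _ _ _ 0 L); try nra; rewrite <- Fq'; [apply EE3; auto | apply EE1].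
    - apply (convex_quad _ _ _ (2*d*c1) L); try nra; rewrite <- Fq'; [apply EE2; lra | apply EE1]. }
  rewrite Fq. destruct (Rle_dec 0 c2).
  - apply (convex_quad _ _ _ 0 L); try nra; rewrite <- Fq; [apply EF1; lra | exact HL].
  - apply (convex_quad _ _ _ (-2*d*c2) L); try nra; rewrite <- Fq; [apply EF2; lra | exact HL].
Qed.
End CaseB.

Lemma core_main : (c1*s2 - c2*s1 >= 0 \/ c1*c2 + s1*s2 >= r3/2) -> F a b <= 3*L^2.
Proof.
  intros [H|H]. - apply caseA; auto.
  - destruct (Rle_dec 0 (c1*s2 - c2*s1)). apply caseA; lra. apply caseB; lra.
Qed.
End Core.

Lemma angle_disj (c1 s1 c2 s2 : R) :
  -1 <= c1 <= 1 -> -1 <= c2 <= 1 -> s1 = sqrt (1 - c1^2) -> s2 = sqrt (1 - c2^2) ->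
  acos c1 + acos (- c2) <= 7*PI/6 ->
  c1*s2 - c2*s1 >= 0 \/ c1*c2 + s1*s2 >= sqrt 3 / 2.
Proof.
  intros H1 H2 E1 E2 H.
  pose proof (acos_bound c1) as B1. pose proof (acos_bound (-c2)) as B2.
  assert (Hc1 : cos (acos c1) = c1) by (apply cos_acos; lra).
  assert (Hc2 : cos (acos (-c2)) = -c2) by (apply cos_acos; lra).
  assert (Hs1 : sin (acos c1) = s1) by (rewrite sin_acos by lra; rewrite E1; unfold Rsqr; f_equal; ring).
  assert (Hs2 : sin (acos (-c2)) = s2) by (rewrite sin_acos by lra; rewrite E2; unfold Rsqr; f_equal; ring).
  set (al := acos c1) in *. set (ga := acos (-c2)) in *.
  destruct (Rle_dec (al + ga) PI) as [Hle|Hgt].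
  - left. pose proof (sin_ge_0 (al+ga)) as K. rewrite sin_plus, Hs1, Hs2, Hc1, Hc2 in K.
    assert (0 <= al + ga) by lra. specialize (K H0 Hle). lra.
  - right. set (t := al + ga - PI).
    assert (Ht : cos (al+ga) = - cos t).
    { unfold t. replace (al+ga) with ((al + ga - PI) + PI) at 1 by ring. apply neg_cos. }
    assert (Hct : cos (PI/6) <= cos t).
    { destruct (Req_dec t (PI/6)) as [E|E]. rewrite E; lra.
      pose proof PI_RGT_0. apply Rlt_le. apply cos_decreasing_1; unfold t in *; lra. }
    rewrite cos_PI6 in Hct. rewrite cos_plus, Hs1, Hs2, Hc1, Hc2 in Ht. lra.
Qed.

Lemma geo (vx vy px py qx qy L N1 N2 : R) :
  (vx*py - vy*px) * (vx*qy - vy*qx) > 0 ->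
  px^2+py^2 <= (px-vx)^2+(py-vy)^2 ->
  vx^2+vy^2 <= (px-vx)^2+(py-vy)^2 ->
  qx^2+qy^2 <= (vx+qx)^2+(vy+qy)^2 ->
  vx^2+vy^2 <= (vx+qx)^2+(vy+qy)^2 ->
  sqrt (px^2+py^2) <= L -> sqrt (qx^2+qy^2) <= L -> sqrt (vx^2+vy^2) <= L ->
  N1 = px*vx+py*vy -> N2 = -(vx*qx+vy*qy) ->
  acos (N1/(sqrt (px^2+py^2) * sqrt (vx^2+vy^2))) + acos (N2/(sqrt (vx^2+vy^2) * sqrt (qx^2+qy^2))) <= 7*PI/6 ->
  (vx+qx-px)^2 + (vy+qy-py)^2 <= 3*L^2.
Proof.
  intros Hcross C1 C2 C3 C4 HaL HbL HdL EN1 EN2 Hang.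
  set (d := sqrt (vx^2+vy^2)) in *. set (a := sqrt (px^2+py^2)) in *. set (b := sqrt (qx^2+qy^2)) in *.
  set (DP := px*vx+py*vy) in *. set (DQ := vx*qx+vy*qy) in *.
  set (XP := vx*py - vy*px) in *. set (XQ := vx*qy - vy*qx) in *.
  assert (Pv : 0 < vx^2+vy^2).
  { destruct (Rlt_dec 0 (vx^2+vy^2)) as [h|h]; auto.
    assert (vx = 0) by nra. assert (vy = 0) by nra. subst XP XQ. subst. nra. }
  assert (Pp : 0 < px^2+py^2).
  { destruct (Rlt_dec 0 (px^2+py^2)) as [h|h]; auto.
    assert (px = 0) by nra. assert (py = 0) by nra. subst XP XQ. subst. nra. }
  assert (Pq : 0 < qx^2+qy^2).
  { destruct (Rlt_dec 0 (qx^2+qy^2)) as [h|h]; auto.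
    assert (qx = 0) by nra. assert (qy = 0) by nra. subst XP XQ. subst. nra. }
  assert (Ed : d^2 = vx^2+vy^2) by (apply pow2_sqrt; lra).
  assert (Ea : a^2 = px^2+py^2) by (apply pow2_sqrt; lra).
  assert (Eb : b^2 = qx^2+qy^2) by (apply pow2_sqrt; lra).
  assert (Hd : 0 < d) by (apply sqrt_lt_R0; lra).
  assert (Ha : 0 < a) by (apply sqrt_lt_R0; lra).
  assert (Hb : 0 < b) by (apply sqrt_lt_R0; lra).
  set (c1 := DP/(a*d)). set (c2 := DQ/(d*b)).
  assert (Ec1 : a*d*c1 = DP) by (unfold c1; field; lra).
  assert (Ec2 : d*b*c2 = DQ) by (unfold c2; field; lra).
  assert (LP : DP^2 + XP^2 = a^2*d^2) by (rewrite Ea, Ed; unfold DP, XP; ring).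
  assert (LQ : DQ^2 + XQ^2 = d^2*b^2) by (rewrite Eb, Ed; unfold DQ, XQ; ring).
  assert (XPn : XP^2 > 0) by (assert (XP <> 0) by (intro E; rewrite E in Hcross; lra); nra).
  assert (XQn : XQ^2 > 0) by (assert (XQ <> 0) by (intro E; rewrite E in Hcross; lra); nra).
  assert (ad2 : 0 < (a*d)^2) by nra. assert (db2 : 0 < (d*b)^2) by nra.
  assert (K1 : (a*d)^2 * (1 - c1^2) = XP^2)
    by (replace ((a*d)^2*(1-c1^2)) with (a^2*d^2 - (a*d*c1)^2) by ring; rewrite Ec1; lra).
  assert (K2 : (d*b)^2 * (1 - c2^2) = XQ^2)
    by (replace ((d*b)^2*(1-c2^2)) with (d^2*b^2 - (d*b*c2)^2) by ring; rewrite Ec2; lra).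
  assert (c1lt : c1^2 < 1).
  { destruct (Rlt_dec (c1^2) 1) as [h|h]; auto.
    assert (0 <= (a*d)^2 * (c1^2 - 1)) by (apply Rmult_le_pos; lra). lra. }
  assert (c2lt : c2^2 < 1).
  { destruct (Rlt_dec (c2^2) 1) as [h|h]; auto.
    assert (0 <= (d*b)^2 * (c2^2 - 1)) by (apply Rmult_le_pos; lra). lra. }
  set (s1 := sqrt (1 - c1^2)). set (s2 := sqrt (1 - c2^2)).
  assert (Es1 : s1^2 = 1 - c1^2) by (apply pow2_sqrt; lra).
  assert (Es2 : s2^2 = 1 - c2^2) by (apply pow2_sqrt; lra).
  assert (Hs1 : 0 < s1) by (apply sqrt_lt_R0; lra).
  assert (Hs2 : 0 < s2) by (apply sqrt_lt_R0; lra).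
  assert (XX : XP*XQ = (a*d*s1)*(d*b*s2)).
  { assert (E : (XP*XQ)^2 = ((a*d*s1)*(d*b*s2))^2).
    { replace ((XP*XQ)^2) with (XP^2*XQ^2) by ring. rewrite <- K1, <- K2, <- Es1, <- Es2. ring. }
    assert (0 < (a*d*s1)*(d*b*s2)).
    { apply Rmult_lt_0_compat; apply Rmult_lt_0_compat; try apply Rmult_lt_0_compat; lra. }
    assert (0 < XP*XQ) by lra.
    nra. }
  assert (c1b : -1 <= c1 <= 1) by nra. assert (c2b : -1 <= c2 <= 1) by nra.
  assert (Hdisj : c1*s2 - c2*s1 >= 0 \/ c1*c2 + s1*s2 >= sqrt 3 / 2).
  { apply angle_disj; auto.
    replace (N1 / (a*d)) with c1 in Hang by (unfold c1; rewrite EN1; auto).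
    replace (N2 / (d*b)) with (-c2) in Hang by (unfold c2; rewrite EN2; field; lra).
    exact Hang. }
  assert (Hmain : F d c1 s1 c2 s2 a b <= 3*L^2).
  { apply (core_main d a b c1 s1 c2 s2 L (sqrt 3)); auto; try lra.
    - assert (2*DP <= d^2) by (rewrite Ed; unfold DP; nra). nra.
    - assert (2*DP <= a^2) by (rewrite Ea; unfold DP; nra). nra.
    - assert (-2*DQ <= d^2) by (rewrite Ed; unfold DQ; nra). nra.
    - assert (-2*DQ <= b^2) by (rewrite Eb; unfold DQ; nra). nra.
    - apply pow2_sqrt; lra.
    - apply sqrt_lt_R0; lra. }
  unfold F in Hmain.
  assert (E1 : (d + b*c2 - a*c1)^2 + (b*s2 - a*s1)^2 = d^2 + a^2 + b^2 + 2*(d*b*c2) - 2*(a*d*c1) - 2*(a*b*(c1*c2+s1*s2))).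
  { nsz. }
  assert (E2 : d^2 * (a*b*(c1*c2+s1*s2)) = (a*d*c1)*(d*b*c2) + (a*d*s1)*(d*b*s2)) by ring.
  rewrite Ec1, Ec2, <- XX in E2.
  assert (E3 : a*b*(c1*c2+s1*s2) = px*qx+py*qy).
  { apply (Rmult_eq_reg_l (d^2)); [|nra]. rewrite E2, Ed. unfold DP, DQ, XP, XQ. ring. }
  rewrite E1, Ec1, Ec2, E3, Ed, Ea, Eb in Hmain. unfold DP, DQ in Hmain.
  replace ((vx + qx - px) ^ 2 + (vy + qy - py) ^ 2) with
    (vx ^ 2 + vy ^ 2 + (px ^ 2 + py ^ 2) + (qx ^ 2 + qy ^ 2) + 2 * (vx * qx + vy * qy) -
      2 * (px * vx + py * vy) - 2 * (px * qx + py * qy)) by ring.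
  exact Hmain.
Qed.

Lemma sq_of (x y z w : point) : edist x y <= edist z w ->
  (fst x - fst y)^2 + (snd x - snd y)^2 <= (fst z - fst w)^2 + (snd z - snd w)^2.
Proof.
  unfold edist. intro H. apply sqrt_le_0; auto; apply Rplus_le_le_0_compat; apply pow2_ge_0.
Qed.

Ltac fit K := eapply Rle_trans; [|eapply Rle_trans; [exact K|]]; right; ring.

Theorem theorem2 (S : list point) (T : list (point * point)) (p u v q : point) :
  NoDup S ->
  EMST S T ->
  adjacent T p u -> adjacent T u v -> adjacent T v q ->
  same_side u v p q ->
  angle_deg p u v + angle_deg u v q <= 210 ->
  edist p q <= sqrt 3 * Rmax (edist p u) (Rmax (edist u v) (edist v q)).
Proof.
  intros HS HE Hpu Huv Hvq Hss Hang.
  unfold same_side in Hss.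
  assert (Npv : p <> v).
  { intro E; subst. unfold orient in Hss. assert (K : (fst v - fst u) * (snd v - snd u) - (snd v - snd u) * (fst v - fst u) = 0) by ring. rewrite K in Hss. lra. }
  assert (Nuq : u <> q).
  { intro E; subst. unfold orient in Hss. assert (K : (fst v - fst q) * (snd q - snd q) - (snd v - snd q) * (fst q - fst q) = 0) by ring. rewrite K in Hss. lra. }
  pose proof (exchange S T p u v HS HE Hpu Huv Npv) as E1.
  pose proof (exchange S T v u p HS HE (adj_sym _ _ _ Huv) (adj_sym _ _ _ Hpu) (not_eq_sym Npv)) as E2.
  pose proof (exchange S T u v q HS HE Huv Hvq Nuq) as E3.
  pose proof (exchange S T q v u HS HE (adj_sym _ _ _ Hvq) (adj_sym _ _ _ Huv) (not_eq_sym Nuq)) as E4.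
  apply sq_of in E1, E2, E3, E4.
  set (M := Rmax (edist p u) (Rmax (edist u v) (edist v q))).
  assert (HaL : edist p u <= M) by apply Rmax_l.
  assert (HdL : edist u v <= M) by (eapply Rle_trans; [apply Rmax_l|apply Rmax_r]).
  assert (HbL : edist v q <= M) by (eapply Rle_trans; [apply Rmax_r|apply Rmax_r]).
  assert (G : ((fst v - fst u) + (fst q - fst v) - (fst p - fst u))^2 + ((snd v - snd u) + (snd q - snd v) - (snd p - snd u))^2 <= 3*M^2).
  { apply (geo (fst v - fst u) (snd v - snd u) (fst p - fst u) (snd p - snd u) (fst q - fst v) (snd q - snd v) M
      ((fst p - fst u) * (fst v - fst u) + (snd p - snd u) * (snd v - snd u))
      ((fst u - fst v) * (fst q - fst v) + (snd u - snd v) * (snd q - snd v))).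
    - unfold orient in Hss.
      replace ((fst v - fst u) * (snd q - snd v) - (snd v - snd u) * (fst q - fst v))
        with ((fst v - fst u) * (snd q - snd u) - (snd v - snd u) * (fst q - fst u)) by ring. lra.
    - fit E1.
    - fit E2.
    - fit E4.
    - fit E3.
    - exact HaL.
    - rewrite edist_sym in HbL. exact HbL.
    - rewrite edist_sym in HdL. exact HdL.
    - reflexivity.
    - ring.
    - unfold angle_deg in Hang. rewrite (edist_sym u v) in Hang. unfold edist in Hang |- *.
      set (X := acos _) in Hang at 1. set (Y := acos _) in Hang at 1.
      pose proof PI_RGT_0.
      assert (E : X + Y = (X * 180 / PI + Y * 180 / PI) * (PI / 180)) by (field; lra).
      fold X. fold Y. rewrite E.
      assert (0 < PI/180) by (apply Rdiv_lt_0_compat; lra). nra. }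
  assert (HM : 0 <= M) by (eapply Rle_trans; [|exact HaL]; apply sqrt_pos).
  unfold edist at 1.
  replace (sqrt 3 * M) with (sqrt (3 * M^2)).
  - apply sqrt_le_1.
    + apply Rplus_le_le_0_compat; apply pow2_ge_0.
    + nra.
    + eapply Rle_trans; [|exact G]. right; ring.
  - rewrite sqrt_mult by nra. rewrite sqrt_pow2 by lra. reflexivity.
Qed.
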